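(* Let $q$ be a prime power, $m\ge1$, $Q:=q^m$, and let $\mathcal{C}$ be an $[[n,\tilde{k},d]]_{q^m}$ rank-metric code defined from a linear code over $\mathbb{F}_Q$ with generator matrix $G\in\mathbb{F}_Q^{\tilde{k}\times n}$. Then $E\colon\mathbb{F}_Q^n\to\mathbb{F}_Q^{\tilde{k}}$, $E(x):=Gx^\top$, is an $(n-d+1,0)$-extractor for $\mathbb{F}_q$-restricted affine sources over $\mathbb{F}_Q$. Conversely, if a linear function $E\colon\mathbb{F}_Q^n\to\mathbb{F}_Q^{\tilde{k}}$ is an $(n-d+1,0)$-extractor for all $\mathbb{F}_q$-restricted affine sources over $\mathbb{F}_Q$, then its matrix is a generator matrix of an $[[n,\tilde{k},d]]_{q^m}$ code.
   Context: Fix an $\mathbb{F}_q$-linear isomorphism $\varphi\colon\mathbb{F}_Q\to\mathbb{F}_q^m$ (elements mapped to column vectors), and define $\Phi\colon\mathbb{F}_Q^n\to\mathbb{F}_q^{m\times n}$ by $\Phi(x_1,\dots,x_n)=[\varphi(x_1)|\cdots|\varphi(x_n)]$. An $[[n,\tilde{k},d]]_{q^m}$ code is a $\tilde{k}$-dimensional $\mathbb{F}_Q$-linear subspace $\mathcal{C}\subseteq\mathbb{F}_Q^n$ whose rank distance $d$ equals $\min\{\mathrm{rank}_{\mathbb{F}_q}\Phi(c): c\in\mathcal{C},c\neq0\}$. A $k$-dimensional affine source over $\mathbb{F}_Q^n$ is the uniform distribution on $\{xA+\beta: x\in\mathbb{F}_Q^k\}$ for some rank-$k$ matrix $A\in\mathbb{F}_Q^{k\times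 n}$ and $\beta\in\mathbb{F}_Q^n$; it is $\mathbb{F}_q$-restricted if $A$ can be chosen with entries in $\mathbb{F}_q$. A function $f\colon\mathbb{F}_Q^n\to\mathbb{F}_Q^{\tilde{k}}$ is a $(k,0)$-extractor for a class of affine sources if for every source in the class of dimension at least $k$, $f$ applied to it is exactly uniform on $\mathbb{F}_Q^{\tilde{k}}$. *)

(* Defs.v *)
From HB Require Import structures.
From mathcomp Require Import all_boot all_order all_algebra all_field.
Set Implicit Arguments. Unset Strict Implicit. Unset Printing Implicit Defensive.
Import GRing.Theory.
Local Open Scope ring_scope.

(* Setting: F = F_q a finite field, L = F_Q a finite-dimensional field extension
   of F (so Q = q^m with m = \dim_F L >= 1).  [finvect_type L] is L equipped with
   its canonical finite-type structure (it is the same field).  *)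
Notation FQ L := (finvect_type L).

Section Defs.
Variables (F : finFieldType) (L : fieldExtType F).

Definition Phi n (x : 'rV[FQ L]_n) : 'M[F]_(\dim {:FQ L}, n) :=
  \matrix_(i < \dim {:FQ L}, j < n) coord (vbasis {:FQ L}) i (x 0 j).

Definition rank_wt n (x : 'rV[FQ L]_n) : nat := \rank (Phi x).

Definition is_rank_code_gen kt n (G : 'M[FQ L]_(kt, n)) (d : nat) : Prop :=
  [/\ \rank G = kt,
      (exists u : 'rV[FQ L]_kt, u *m G != 0 /\ rank_wt (u *m G) = d) &
      (forall u : 'rV[FQ L]_kt, u *m G != 0 -> (d <= rank_wt (u *m G))%N)].

Definition affine_support k n (A : 'M[FQ L]_(k, n)) (beta : 'rV[FQ L]_n)
  : {set 'rV[FQ L]_n} := [set x *m A + beta | x : 'rV[FQ L]_k].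

Definition Fq_restricted k n (A : 'M[FQ L]_(k, n)) : Prop :=
  exists A0 : 'M[F]_(k, n), A = map_mx (in_alg (FQ L)) A0.

(* f applied to the uniform distribution on S is exactly uniform on F_Q^kt:
   for every y, Pr[f(X) = y] = #{v in S | f v = y} / #S = 1 / Q^kt. *)
Definition uniform_output n kt (f : 'rV[FQ L]_n -> 'rV[FQ L]_kt)
  (S : {set 'rV[FQ L]_n}) : Prop :=
  forall y : 'rV[FQ L]_kt,
    (#|[set v in S | f v == y]| * #|{: 'rV[FQ L]_kt}|)%N = #|S|.

Definition Fq_restricted_extractor n kt (f : 'rV[FQ L]_n -> 'rV[FQ L]_kt)
  (k : nat) : Prop :=
  forall (k' : nat) (A : 'M[FQ L]_(k', n)) (beta : 'rV[FQ L]_n),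
    (k <= k')%N -> \rank A = k' -> Fq_restricted A ->
    uniform_output f (affine_support A beta).

End Defs.

(* Main.v *)
Require Import Defs.
From HB Require Import structures.
From mathcomp Require Import all_boot all_order all_algebra all_field.
From mathcomp Require Import zify.
Import GRing.Theory.
Local Open Scope ring_scope.

Lemma keyK (F : finFieldType) (L : fieldExtType F) n k (c : 'rV[FQ L]_n) (A0 : 'M[F]_(k, n)) :
  (c *m (map_mx (in_alg (FQ L)) A0)^T == 0) = (Phi c *m A0^T == 0).
Proof.
have E i : (c *m (map_mx (in_alg (FQ L)) A0)^T) 0 i = \sum_j A0 i j *: c 0 j.
  rewrite !mxE; apply: eq_bigr => j _; rewrite !mxE mulr_algr //.
have E2 l i : (Phi c *m A0^T) l i = coord (vbasis {:FQ L}) l (\sum_j A0 i j *: c 0 j).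
  rewrite !mxE linear_sum; apply: eq_bigr => j _; rewrite linearZ /= !mxE mulrC //.
apply/eqP/eqP => H.
  apply/matrixP => l i; rewrite E2 -E H !mxE linear0 //.
apply/matrixP => z i; rewrite ord1 E mxE.
rewrite (coord_vbasis (memvf (\sum_j A0 i j *: c 0 j))).
apply: big1 => l _; rewrite -E2 H mxE scale0r //.
Qed.
Section C.
Variables (F : finFieldType) (L : fieldExtType F).
Local Notation K := (FQ L).

Lemma unif_of_surj n kt k (A : 'M[K]_(k, n)) beta (M : 'M[K]_(n, kt)) :
  (forall z : 'rV[K]_kt, exists x : 'rV[K]_k, x *m (A *m M) = z) ->
  uniform_output (fun x => x *m M) (affine_support A beta).
Proof.
move=> surj.
set S := affine_support A beta.
pose fib (y : 'rV[K]_kt) := [set v in S | v *m M == y].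
have eqc y1 y2 : #|fib y1| = #|fib y2|.
  have [x0 Hx0] := surj (y2 - y1).
  have -> : fib y2 = (fun v => v + x0 *m A) @: fib y1.
    apply/setP => v; apply/idP/imsetP.
      rewrite inE => /andP[/imsetP[x _ ->] /eqP Hy].
      exists (x *m A + beta - x0 *m A); last by rewrite subrK.
      rewrite inE; apply/andP; split.
        by apply/imsetP; exists (x - x0) => //; rewrite mulmxBl addrAC.
      by rewrite !mulmxBl Hy -mulmxA Hx0 opprB addrC subrK.
    move=> [w]; rewrite inE => /andP[/imsetP[x _ ->] /eqP Hy] ->.
    rewrite inE; apply/andP; split.
      by apply/imsetP; exists (x + x0) => //; rewrite mulmxDl addrAC.
    by rewrite mulmxDl Hy -mulmxA Hx0 addrC subrK.
  by rewrite card_imset //; apply: addIr.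
move=> y.
have -> : #|S| = (\sum_(z : 'rV[K]_kt) #|fib z|)%N.
  rewrite -sum1_card (partition_big (fun v => v *m M) predT) //=.
  apply: eq_bigr => z _; rewrite -sum1_card; apply: eq_bigl => v.
  by rewrite inE.
rewrite (eq_bigr (fun _ => #|fib y|)); last by move=> z _; apply: eqc.
by rewrite sum_nat_const mulnC.
Qed.

Lemma surj_of_unif n kt k (A : 'M[K]_(k, n)) beta (M : 'M[K]_(n, kt)) :
  uniform_output (fun x => x *m M) (affine_support A beta) ->
  forall z : 'rV[K]_kt, exists x : 'rV[K]_k, x *m (A *m M) = z.
Proof.
move=> U z.
have := U (z + beta *m M).
have : beta \in affine_support A beta by apply/imsetP; exists 0; rewrite ?mul0mx ?add0r.
move=> Hb.
case: (set_0Vmem [set v in affine_support A beta | v *m M == z + beta *m M]) => [->|[v]].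
  rewrite cards0 mul0n => /esym/eqP; rewrite cards_eq0 => /eqP H.
  by rewrite H inE in Hb.
rewrite inE => /andP[/imsetP[x _ ->] /eqP Hy] _.
exists x; rewrite mulmxA; apply: (addIr (beta *m M)); by rewrite -mulmxDl.
Qed.
End C.

Lemma full_of_surj (K : fieldType) k kt (N : 'M[K]_(k, kt)) :
  (forall z : 'rV[K]_kt, exists x : 'rV[K]_k, x *m N = z) -> row_full N.
Proof.
move=> H; rewrite -sub1mx; apply/row_subP => i.
have [x Hx] := H (row i 1%:M); apply/submxP; exists x; by rewrite Hx.
Qed.

Theorem mainTheorem6 (F : finFieldType) (L : fieldExtType F) (n kt : nat) :
  (forall (G : 'M[FQ L]_(kt, n)) (d : nat),
     is_rank_code_gen G d ->
     Fq_restricted_extractor (fun x : 'rV[FQ L]_n => x *m G^T) (n - d + 1)) /\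
  (forall (E : {linear 'rV[FQ L]_n -> 'rV[FQ L]_kt}) (d : nat),
     (1 <= d <= n)%N ->
     Fq_restricted_extractor E (n - d + 1) ->
     let G := (lin1_mx E)^T in
     \rank G = kt /\
     (forall u : 'rV[FQ L]_kt, u *m G != 0 -> (d <= rank_wt (u *m G))%N)).
Proof.
split.
  move=> G d [rG _ dist] k' A beta Hk rA [A0 HA0].
  apply: unif_of_surj.
  suff Hfull : row_full (A *m G^T).
    by move=> z; have /submxP [x ->] := submx_full z Hfull; exists x.
  rewrite /row_full -mxrank_tr trmx_mul trmxK -[_ == kt]/(row_free _).
  rewrite -kermx_eq0; apply/negPn/negP => Hnz.
  have [i Hi] : exists i, row i (kermx (G *m A^T)) != 0.
    case/boolP: [exists i, row i (kermx (G *m A^T)) != 0] => [/existsP//|/existsPn Hall].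
    exfalso; move: Hnz; apply/negP/negPn/eqP/row_matrixP => i; rewrite row0; exact/eqP/negPn/Hall.
  set u := row i _ in Hi.
  have Hu : u *m (G *m A^T) = 0 by apply/sub_kermxP; exact: row_sub.
  have Hc : u *m G != 0 by rewrite mulmx_free_eq0 // /row_free rG.
  have Hd := dist u Hc.
  have HcA : (u *m G) *m (map_mx (in_alg (FQ L)) A0)^T == 0
    by rewrite -HA0 -mulmxA Hu.
  rewrite keyK in HcA.
  have HA0k : (A0 <= kermx (Phi (u *m G))^T)%MS.
    by apply/sub_kermxP; rewrite -[A0]trmxK -trmx_mul (eqP HcA) trmx0.
  have := mxrankS HA0k; rewrite mxrank_ker mxrank_tr.
  have : \rank A0 = k' by rewrite -[in RHS]rA HA0 mxrank_map.
  rewrite /rank_wt in Hd.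
  move=> -> H; have := leq_trans Hk (leq_trans H (leq_sub2l n Hd)); by rewrite addn1 ltnn.
move=> E d Hd Ext G.
set M := lin1_mx E.
have conv k (A : 'M_(k, n)) beta : uniform_output E (affine_support A beta) ->
    uniform_output (fun x => x *m M) (affine_support A beta).
  move=> U y; rewrite -(U y); congr (_ * _)%N; apply: eq_card => v.
  by rewrite !inE mul_rV_lin1.
have rM : \rank M = kt.
  have H1 : Fq_restricted (1%:M : 'M[FQ L]_n) by exists 1%:M; rewrite map_mx1.
  have := Ext n 1%:M 0 _ (mxrank1 _ _) H1.
  have Hn : (n - d + 1 <= n)%N by lia.
  move=> /(_ Hn) /conv /surj_of_unif /full_of_surj.
  by rewrite mul1mx => /eqP.
split; first by rewrite /G mxrank_tr.
move=> u Hc; rewrite leqNgt; apply/negP => Hlt.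
set c := u *m G in Hc Hlt.
set B := kermx (Phi c)^T.
set A0 := row_base B.
have rA0 : \rank (map_mx (in_alg (FQ L)) A0) = \rank B by rewrite mxrank_map eq_row_base.
have HR : Fq_restricted (map_mx (in_alg (FQ L)) A0) by exists A0.
have Hk : (n - d + 1 <= \rank B)%N.
  by rewrite /B mxrank_ker mxrank_tr; rewrite /rank_wt in Hlt; lia.
have := Ext _ _ 0 Hk rA0 HR.
move=> /conv /surj_of_unif /full_of_surj Hfull.
have HcA : c *m (map_mx (in_alg (FQ L)) A0)^T == 0.
  rewrite keyK.
  have : (A0 <= B)%MS by rewrite eq_row_base.
  move/sub_kermxP => H0.
  by rewrite -[Phi c *m _]trmxK trmx_mul trmxK H0 trmx0.
move: HcA; rewrite /c /G -mulmxA -trmx_mul mulmx_free_eq0.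
  by move=> /eqP Hu0; move: Hc; rewrite /c Hu0 mul0mx eqxx.
by rewrite /row_free mxrank_tr.
Qed.
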